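(* Let $T\subset V$ be an open cone with basepoint $b\in T$, and let $x\in\partial T\setminus[0]_T$. If a sequence $(x_n)$ in $T$ converges to $x$ in the usual topology of $V$, then it converges in the reverse Funk sense to $r_{T,x}$, i.e. $RF_T(\cdot,x_n)-RF_T(b,x_n)\to r_{T,x}$ pointwise on $T$.
   Context: $V$ is a finite-dimensional real vector space. An open cone is a nonempty open convex set $T\subset V$ with $\lambda T\subseteq T$ for all $\lambda>0$ and $0\notin T$; $\partial T$ its boundary. Write $x\le_T y$ iff $y-x\in\overline T$, $[0]_T:=\overline T\cap(-\overline T)$. $M_T(y/x):=\inf\{\lambda>0:y\le_T\lambda x\}$ for $y\in V,x\in T$, $F_T(y,x):=\log M_T(y/x)$, and the (extended) reverse Funk function $RF_T(x,y):=\log M_T(y/x)$ for $x\in T$, $y\in V$. For $p\in\partial T\setminus[0]_T$, $r_{T,p}(x):=RF_T(x,p)-RF_T(b,p)$, $x\in T$. *)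

(* Defs.v *)
(* V = 'rV[R]_n with R : realType (any finite-dim real space). *)
From HB Require Import structures.
From mathcomp Require Import all_boot all_order all_algebra.
From mathcomp Require Import all_classical all_reals all_analysis.
Set Implicit Arguments. Unset Strict Implicit. Unset Printing Implicit Defensive.
Import Order.TTheory GRing.Theory Num.Theory.
Import numFieldNormedType.Exports.
Local Open Scope classical_set_scope.
Local Open Scope ring_scope.

Section ConeDefs.
Variables (R : realType) (n : nat).
Local Notation V := 'rV[R]_n.

Definition open_cone (T : set V) : Prop :=
  [/\ T !=set0, open T,
      (forall x y (t : R), T x -> T y -> 0 <= t <= 1 -> T (t *: x + (1 - t) *: y)),
      (forall x (l : R), T x -> 0 < l -> T (l *: x)) & ~ T 0].

Definition cle (T : set V) (x y : V) : Prop := closure T (y - x).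

Definition zero_part (T : set V) : set V :=
  [set z | closure T z /\ closure T (- z)].

Definition cone_boundary (T : set V) : set V := closure T `\` interior T.

Definition MT (T : set V) (y x : V) : R :=
  inf [set l : R | 0 < l /\ cle T y (l *: x)].

(* F_T(y,x) = RF_T(x,y) = log M_T(y/x), with log 0 = -oo (extended) *)
Definition RF (T : set V) (x y : V) : \bar R :=
  if 0 < MT T y x then (ln (MT T y x))%:E else -oo%E.

Definition rfun (T : set V) (b p : V) (x : V) : \bar R :=
  (RF T x p - RF T b p)%E.

End ConeDefs.

(* Main.v *)
Require Import Defs.
From HB Require Import structures.
From mathcomp Require Import all_boot all_order all_algebra.
From mathcomp Require Import all_classical all_reals all_analysis.
From mathcomp Require Import lra.
Import Order.TTheory GRing.Theory Num.Theory.
Import numFieldNormedType.Exports.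
Local Open Scope classical_set_scope.
Local Open Scope ring_scope.

Lemma cone_ball {R : realType} {n : nat} (T : set 'rV[R]_n) (y : 'rV[R]_n) :
  open_cone T -> T y -> exists2 r : R, 0 < r & forall w, `|w| <= r -> T (y + w).
Proof.
case=> _ To _ _ _ Ty.
have : nbhs y T by move: To; rewrite openE; apply.
move=> /nbhs_normP [e /= e0 He].
exists (e / 2); first by rewrite divr_gt0.
move=> w hw; apply: He => /=.
rewrite opprD addrA subrr add0r normrN.
apply: (le_lt_trans hw); rewrite ltr_pdivrMr // ltr_pMr //.
by rewrite ltr1n.
Qed.

Lemma cone_add {R : realType} {n : nat} (T : set 'rV[R]_n) (s t : 'rV[R]_n) :
  open_cone T -> T s -> T t -> T (s + t).
Proof.
move=> hT; case: (hT) => _ _ Hc Hs _ Ts Tt.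
have h2 : (0 : R) < 2 by [].
have -> : s + t = 2 *: ((2^-1 : R) *: s + (1 - 2^-1) *: t).
  rewrite scalerDr !scalerA mulrBr mulr1 divff ?pnatr_eq0 // .
  have -> : (2 : R) - 1 = 1 by rewrite -[2]/(1 + 1)%:R natrD addrK.
  by rewrite !scale1r.
apply: Hs => //; apply: Hc => //.
by rewrite invr_ge0 ler0n /= invf_le1 // ler1n.
Qed.

Lemma cone_cl_add {R : realType} {n : nat} (T : set 'rV[R]_n) (c t : 'rV[R]_n) :
  open_cone T -> closure T c -> T t -> T (c + t).
Proof.
move=> hT Hc Tt; have [r r0 Hr] := cone_ball T t hT Tt.
have [s [Ts Bs]] := Hc _ (nbhsx_ballx c r r0).
move: Bs; rewrite -ball_normE /= => Bs.
have -> : c + t = s + (t + (c - s)) by rewrite [RHS]addrCA [s + _]addrC subrK addrC.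
apply: cone_add => //; apply: Hr; exact: ltW.
Qed.
Lemma MT_ne {R : realType} {n : nat} (T : set 'rV[R]_n) (v y : 'rV[R]_n) :
  open_cone T -> T y -> [set l : R | 0 < l /\ cle T v (l *: y)] !=set0.
Proof.
move=> hT Ty; have [r r0 Hr] := cone_ball T y hT Ty.
case: (hT) => _ _ _ Hs _.
set l := `|v| / r + 1.
have l0 : 0 < l by rewrite ltr_wpDl // divr_ge0 // ltW.
exists l; split => //; apply: subset_closure.
have -> : l *: y - v = l *: (y + (- l^-1) *: v).
  by rewrite scalerDr scalerA mulrN divff ?gt_eqF // scaleN1r.
apply: Hs => //; apply: Hr.
rewrite normrZ normrN normfV gtr0_norm // mulrC ler_pdivrMr //.
rewrite /l mulrDr mulr1 mulrCA divff ?gt_eqF // mulr1.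
by rewrite lerDl ltW.
Qed.

Lemma MT_ge0 {R : realType} {n : nat} (T : set 'rV[R]_n) (v y : 'rV[R]_n) :
  open_cone T -> T y -> 0 <= MT T v y.
Proof.
move=> hT Ty; apply: lb_le_inf; first exact: MT_ne.
by move=> l [l0 _]; apply: ltW.
Qed.

Lemma MT_lip {R : realType} {n : nat} (T : set 'rV[R]_n) (v v' y : 'rV[R]_n) (r : R) :
  open_cone T -> T y -> 0 < r -> (forall w, `|w| <= r -> T (y + w)) ->
  MT T v' y <= MT T v y + `|v - v'| / r.
Proof.
move=> hT Ty r0 Hr.
case: (hT) => _ _ _ Hs _.
rewrite -lerBlDr; apply: lb_le_inf; first exact: MT_ne.
move=> l [l0 Hl]; rewrite lerBlDr.
set d := `|v - v'| / r.
have d0 : 0 <= d by rewrite divr_ge0 // ltW.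
have hlb : has_lbound [set l : R | 0 < l /\ cle T v' (l *: y)].
  by exists 0 => z [z0 _]; apply: ltW.
apply: (ge_inf hlb); split; first by rewrite ltr_wpDr.
rewrite /cle.
have [e|ne] := eqVneq v v'.
  by rewrite /d -e subrr normr0 mul0r addr0.
have dp : 0 < d by rewrite divr_gt0 // normr_gt0 subr_eq0.
have -> : (l + d) *: y - v' = (l *: y - v) + d *: (y + (- d^-1) *: (v' - v)).
  rewrite scalerDr scalerA mulrN divff ?gt_eqF // scaleN1r scalerDl.
  by rewrite opprB addrACA addKr.
apply: subset_closure; apply: cone_cl_add => //.
apply: Hs => //; apply: Hr.
rewrite normrZ normrN normfV gtr0_norm // [`|v' - v|]distrC /d.
by rewrite invfM invrK mulrAC mulVf ?mul1r // normr_eq0 subr_eq0.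
Qed.

Lemma MT_cvg {R : realType} {n : nat} (T : set 'rV[R]_n) (x y : 'rV[R]_n)
  (u : nat -> 'rV[R]_n) :
  open_cone T -> T y -> u @ \oo --> x ->
  (fun k => MT T (u k) y) @ \oo --> MT T x y.
Proof.
move=> hT Ty ux; have [r r0 Hr] := cone_ball T y hT Ty.
apply/cvgrPdist_lt => e e0.
have er : 0 < e * r by rewrite mulr_gt0.
move/cvgrPdist_lt : ux => /(_ _ er); apply: filterS => k hk.
have h1 := MT_lip T (u k) x y r hT Ty r0 Hr.
have h2 := MT_lip T x (u k) y r hT Ty r0 Hr.
have hd : `|x - u k| / r < e by rewrite ltr_pdivrMr.
move: h1 h2 hd; rewrite [`|u k - x|]distrC.
move: (MT T x y) (MT T (u k) y) (`|x - u k| / r) => a b d h1 h2 hd.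
rewrite ltr_norml; apply/andP; split; lra.
Qed.

Lemma MT_pos {R : realType} {n : nat} (T : set 'rV[R]_n) (x y : 'rV[R]_n) :
  open_cone T -> T y -> cone_boundary T x -> ~ zero_part T x -> 0 < MT T x y.
Proof.
move=> hT Ty [clx _] nz.
rewrite lt_def MT_ge0 // andbT; apply/negP => /eqP M0; apply: nz.
split => // B /nbhs_normP [e /= e0 He].
set c := e / 2 / (`|y| + 1).
have yp : 0 < `|y| + 1 by rewrite ltr_wpDl.
have c0 : 0 < c by rewrite divr_gt0 // divr_gt0.
have [l [l0 Hl] lc] : exists2 l, (0 < l /\ cle T x (l *: y)) & l < c.
  by apply: inf_lt; [exact: MT_ne | rewrite -/(MT T x y) M0].
have e20 : 0 < e / 2 by rewrite divr_gt0.
have [t [Tt Bt]] := Hl _ (nbhsx_ballx _ _ e20).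
move: Bt; rewrite -ball_normE /= => Bt.
exists t; split => //; apply: He => /=.
have -> : - x - t = (l *: y - x - t) - l *: y by rewrite [RHS]addrC addrA addKr.
apply: (le_lt_trans (ler_normB _ _)).
have hly : `|l *: y| < e / 2.
  rewrite normrZ gtr0_norm //; apply: (le_lt_trans (y := l * (`|y| + 1))).
    by rewrite ler_pM2l // lerDl.
  by rewrite -ltr_pdivlMr.
by rewrite (splitr e) ltrD.
Qed.

Lemma RF_pos {R : realType} {n : nat} (T : set 'rV[R]_n) (w v : 'rV[R]_n) :
  0 < MT T v w -> RF T w v = (ln (MT T v w))%:E.
Proof. by move=> h; rewrite /RF h. Qed.

Theorem mainTheorem15 (R : realType) (n : nat) (T : set 'rV[R]_n)
    (b x : 'rV[R]_n) (u : nat -> 'rV[R]_n) :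
  open_cone T -> T b ->
  cone_boundary T x -> ~ zero_part T x ->
  (forall k, T (u k)) -> u @ \oo --> x ->
  forall y, T y ->
    (fun k => (RF T y (u k) - RF T b (u k))%E) @ \oo --> rfun T b x y.
Proof.
move=> hT Tb bx nz Tu ux y Ty.
have FF : Filter (nbhs (\oo : set_system nat)) by exact: eventually_filter.
have Py := MT_pos T x y hT Ty bx nz.
have Pb := MT_pos T x b hT Tb bx nz.
have cy := MT_cvg T x y u hT Ty ux.
have cb := MT_cvg T x b u hT Tb ux.
have c1 := (cvg_comp (fun k => MT T (u k) y) (@ln R) cy (continuous_ln Py)).
have c2 := (cvg_comp (fun k => MT T (u k) b) (@ln R) cb (continuous_ln Pb)).
have cg := cvgB c1 c2.
set g := (_ - _)%R in cg.
have E : rfun T b x y = (ln (MT T x y) - ln (MT T x b))%:E.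
  by rewrite /rfun (RF_pos _ _ _ Py) (RF_pos _ _ _ Pb) EFinB.
rewrite E.
have H : \forall k \near \oo,
    (RF T y (u k) - RF T b (u k))%E = (g k)%:E.
  have h1 := cvgr_gt _ cy 0 Py.
  have h2 := cvgr_gt _ cb 0 Pb.
  specialize (h1 eventually_filter). specialize (h2 eventually_filter).
  apply: filterS2 h1 h2 => k k1 k2.
  rewrite (RF_pos _ _ _ k1) (RF_pos _ _ _ k2) -EFinB; reflexivity.
have H' : \forall k \near \oo, (EFin \o g) k = (RF T y (u k) - RF T b (u k))%E.
  Timeout 30 apply: (filterS _ H). Timeout 30 move=> k hk. Timeout 30 rewrite hk. Timeout 30 reflexivity.
Timeout 30 apply: (cvg_trans (@near_eq_cvg _ _ _ eventually_filter (EFin \o g) _ H')).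
Timeout 30 apply: cvg_EFin. Timeout 30 apply: nearW. Timeout 30 done.
Timeout 30 exact: (cg eventually_filter).
Qed.
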